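(* Every finite graph is isomorphic to an induced subgraph of the dual enhanced power graph of some finite group, and this group can be taken to be cyclic.
   Context: The dual enhanced power graph $\mathrm{DEP}(G)$ of a group $G$ has vertex set $G\setminus\{1\}$, with distinct $x,y$ adjacent iff $\langle x\rangle\cap\langle y\rangle\ne\{1\}$. *)

(* Defs.v *)
From mathcomp Require Import all_boot all_fingroup all_solvable.
Set Implicit Arguments. Unset Strict Implicit. Unset Printing Implicit Defensive.
Import GroupScope.
Local Open Scope group_scope.

Definition dep_adj (gT : finGroupType) (G : {set gT}) (x y : gT) : bool :=
  [&& x \in G^#, y \in G^#, x != y & <[x]> :&: <[y]> != 1].

Definition simple_graph (V : finType) (e : rel V) : Prop :=
  symmetric e /\ irreflexive e.

(* Main.v *)
Require Import Defs.
From mathcomp Require Import all_boot all_fingroup all_solvable all_algebra.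
Import GroupScope.

Lemma ordX (gT : finGroupType) (g : gT) d : d %| #[g] -> #[g ^+ (#[g] %/ d)] = d.
Proof.
move=> dd; have g0 := order_gt0 g.
have d0 : 0 < d by apply: dvdn_gt0 dd.
case/dvdnP: dd => k Ek.
have k0 : 0 < k by move: g0; rewrite Ek muln_gt0 => /andP[].
rewrite orderXdiv; last by rewrite Ek mulnK // dvdn_mulr.
by rewrite Ek mulnK // mulKn.
Qed.

Lemma memX (gT : finGroupType) (g : gT) c d : c %| d -> d %| #[g] ->
  g ^+ (#[g] %/ c) \in <[g ^+ (#[g] %/ d)]>.
Proof.
move=> cd dg; have g0 := order_gt0 g.
have d0 : 0 < d by apply: dvdn_gt0 dg.
have c0 : 0 < c by apply: dvdn_gt0 cd.
case/dvdnP: dg => k Ek; case/dvdnP: cd => j Ej.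
apply/cycleP; exists j; rewrite -expgM; congr (_ ^+ _).
by rewrite Ek mulnK // Ej mulnA mulnK.
Qed.

Lemma inter_ne1 (gT : finGroupType) (g : gT) d1 d2 : d1 %| #[g] -> d2 %| #[g] ->
  (<[g ^+ (#[g] %/ d1)]> :&: <[g ^+ (#[g] %/ d2)]> != 1) = (1 < gcdn d1 d2).
Proof.
move=> d1g d2g.
have d10 : 0 < d1 by apply: dvdn_gt0 d1g.
apply/idP/idP.
  case/trivgPn => y /setIP[y1 y2] ny.
  have o1 := order_dvdG y1; have o2 := order_dvdG y2.
  rewrite -/#[_] ordX // in o1; rewrite -/#[_] ordX // in o2.
  have : #[y] %| gcdn d1 d2 by rewrite dvdn_gcd o1 o2.
  move/dvdn_leq; rewrite gcdn_gt0 d10 => /(_ isT).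
  apply: leq_trans; rewrite ltn_neqAle order_gt0 andbT eq_sym order_eq1 //.
move=> gt1; apply/trivgPn; exists (g ^+ (#[g] %/ gcdn d1 d2)).
  by rewrite inE !memX ?dvdn_gcdl ?dvdn_gcdr.
rewrite -order_eq1 ordX; first by case: (gcdn d1 d2) gt1 => [|[]].
exact: dvdn_trans (dvdn_gcdl _ _) d1g.
Qed.

Fixpoint P (k : nat) : nat :=
  if k is k'.+1 then sval (prime_above (P k')) else 2.

Lemma P_prime k : prime (P k).
Proof. by case: k => [|k] //=; case: (prime_above _). Qed.

Lemma P_lt k : P k < P k.+1.
Proof. by rewrite /=; case: (prime_above _). Qed.

Lemma P_inj : injective P.
Proof.
have mono : forall m n, m < n -> P m < P n.
  move=> m n; elim: n => // n IH; rewrite ltnS leq_eqVlt => /orP[/eqP->|/IH h].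
    exact: P_lt.
  exact: ltn_trans h (P_lt n).
move=> m n E; apply/eqP; case: (ltngtP m n) => // h.
  by move: (mono _ _ h); rewrite E ltnn.
by move: (mono _ _ h); rewrite E ltnn.
Qed.

Section G.
Variables (V : finType) (e : rel V).
Definition key (u w : V) : nat := enum_rank [set u; w].
Definition dd (v : V) := (\prod_(w | (w == v) || e v w) P (key v w))%N.

Lemma key_inj u w u' w' : key u w = key u' w' -> [set u; w] = [set u'; w'].
Proof. by move/val_inj/enum_rank_inj. Qed.

Lemma dvd_dd q v : prime q ->
  (q %| dd v) = [exists w, ((w == v) || e v w) && (q == P (key v w))].
Proof.
move=> pq; rewrite /dd Euclid_dvd_prod // big_orE.
apply/existsP/existsP => [][w /andP[h1 h2]]; exists w; rewrite h1 /=.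
  by rewrite -(dvdn_prime2 pq (P_prime _)).
by rewrite (dvdn_prime2 pq (P_prime _)).
Qed.

Lemma dd_gt0 v : 0 < dd v.
Proof. by apply: prodn_gt0 => w; apply: prime_gt0 (P_prime _). Qed.

Lemma dd_self v : P (key v v) %| dd v.
Proof. by rewrite dvd_dd ?P_prime //; apply/existsP; exists v; rewrite !eqxx. Qed.

Lemma dd_gt1 v : 1 < dd v.
Proof.
apply: leq_trans (prime_gt1 (P_prime (key v v))) _.
exact: dvdn_leq (dd_gt0 v) (dd_self v).
Qed.

Lemma dd_inj : injective dd.
Proof.
move=> u v E; have := dd_self u; rewrite E dvd_dd ?P_prime //.
case/existsP => w /andP[_ /eqP/P_inj/key_inj Es].
by have := setU11 v [set w]; rewrite -Es !inE orbb => /eqP.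
Qed.

Lemma gcd_dd u v : symmetric e -> u != v -> (1 < gcdn (dd u) (dd v)) = e u v.
Proof.
move=> se nuv; apply/idP/idP.
  move=> g1; have pp := pdiv_prime g1; have := pdiv_dvd (gcdn (dd u) (dd v)).
  rewrite dvdn_gcd !dvd_dd // => /andP[/existsP[w1 /andP[h1 /eqP E1]]].
  case/existsP => w2 /andP[_ /eqP]; rewrite E1 => /P_inj/key_inj Es.
  have : v \in [set u; w1] by rewrite Es setU11.
  rewrite !inE eq_sym (negbTE nuv) /= => /eqP Ew1; subst w1.
  by move: h1; rewrite eq_sym (negbTE nuv).
move=> euv; have pp := P_prime (key u v).
have h : P (key u v) %| gcdn (dd u) (dd v).
  rewrite dvdn_gcd !dvd_dd //; apply/andP; split; apply/existsP.
    by exists v; rewrite euv orbT eqxx.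
  by exists u; rewrite se euv orbT /key setUC eqxx.
apply: leq_trans (prime_gt1 pp) (dvdn_leq _ h).
by rewrite gcdn_gt0 dd_gt0.
Qed.
End G.

Theorem mainTheorem11 (V : finType) (e : rel V) :
  simple_graph e ->
  exists (gT : finGroupType) (G : {group gT}),
    cyclic G /\
    exists f : V -> gT,
      [/\ injective f,
          (forall v, f v \in (G^#)%g) &
          (forall u v, e u v = dep_adj G (f u) (f v))].
Proof.
case=> se ie.
pose N := (\prod_(v : V) dd V e v)%N.
pose g : 'I_N.-1.+1 := Zp1.
have og : #[g] = N by rewrite order_Zp1 prednK // /N prodn_gt0 // => v; apply: (@dd_gt0 V e).
have dvN : forall v, dd V e v %| #[g].
  by move=> v; rewrite og /N (bigD1 v) //= dvdn_mulr.
exists _, <[g]>%G; split; first exact: cycle_cyclic.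
pose f v := g ^+ (#[g] %/ dd V e v).
have ne1 : forall v, f v != 1.
  by move=> v; rewrite -order_eq1 /f ordX // gtn_eqF // (@dd_gt1 V e).
have finj : injective f.
  move=> u v E; apply: (@dd_inj V e).
  by rewrite -(@ordX _ g _ (dvN u)) -(@ordX _ g _ (dvN v)) -/(f u) -/(f v) E.
exists f; split => //.
  by move=> v; rewrite !inE ne1 /f mem_cycle.
move=> u v; rewrite /dep_adj !inE !ne1 /f !mem_cycle /=.
case: (eqVneq u v) => [<-|nuv]; first by rewrite ie eqxx.
rewrite (inj_eq finj) nuv /= inter_ne1 //.
by rewrite gcd_dd.
Qed.
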